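(* Let $U\ge 1$ and $k\ge U$ be integers with $k$ a multiple of $U$. Let $(n(i))_{i\ge 0}$ be defined by: - $n(0)=1$; - $n(i)=\sum_{m=0}^{i-1}n(m)$ for $1\le i\le U$; - $n(i)=\sum_{m=1}^{i-1}n(m)$ for $U<i\le k$; - $n(i)=\sum_{m=i-k}^{i-1}n(m)$ for $i>k$. (This recurrence counts the peers newly reached at delay $i$ in the multiple-unbalanced-tree chunk distribution.) Then for all integers $i\ge 1$, $$n(i)=\sum_{j=1}^{U}F_k(i-j+1),$$ and consequently, for every integer $t\ge 0$, $$\sum_{i=1}^{t}n(i)=\sum_{j=1}^{U}S_k(t-j+1)=\overline{N}(t).$$
   Context: $F_k(i)=0$ for $i\le 0$, $F_k(1)=1$, and $F_k(i)=\sum_{j=1}^k F_k(i-j)$ for $i>1$ (the $k$-step Fibonacci sequence). $S_k(n)=0$ for $n\le 0$ and $S_k(n)=\sum_{i=1}^n F_k(i)$ for $n>0$. $\overline{N}(t)=\sum_{j=1}^{U}S_k(t-j+1)$ is the upper bound on the stream diffusion metric for chunk-based streaming with normalized upload capacity $U$ and at most $k$ neighbors per node. *)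

(* Defs.v *)
From mathcomp Require Import all_boot all_order all_algebra.
Set Implicit Arguments. Unset Strict Implicit. Unset Printing Implicit Defensive.

(* Flist k m = [:: F_k(0); F_k(1); ...; F_k(m)] (nat-indexed values). *)
Fixpoint Flist (k m : nat) : seq nat :=
  match m with
  | 0 => [:: 0]
  | m'.+1 =>
      let s := Flist k m' in
      rcons s (if m' == 0 then 1
               else \sum_(1 <= j < k.+1) nth 0 s (m'.+1 - j))
  end.
(* in the sum, an index m'.+1 - j truncated to 0 correctly yields F_k(0) = 0 *)

Definition Fnat (k i : nat) : nat := nth 0 (Flist k i) i.

(* k-step Fibonacci on integer arguments: F_k(i) = 0 for i <= 0 *)
Definition Fk (k : nat) (i : int) : nat :=
  match i with Posz n => Fnat k n | Negz _ => 0 end.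

Definition Sk (k : nat) (n : int) : nat :=
  match n with Posz m => \sum_(1 <= i < m.+1) Fnat k i | Negz _ => 0 end.

Definition Nbar (U k : nat) (t : int) : nat :=
  \sum_(1 <= j < U.+1) Sk k (t - (j%:Z) + 1)%R.

(* Main.v *)
Require Import Defs.
From mathcomp Require Import all_boot all_order all_algebra.
From Stdlib Require Import Lia.
Import GRing.Theory Num.Theory.

Lemma size_Flist k m : size (Flist k m) = m.+1.
Proof. by elim: m => [|m IH] //=; rewrite size_rcons IH. Qed.

Lemma Flist_prefix k m i : i <= m -> nth 0 (Flist k m) i = Fnat k i.
Proof.
elim: m => [|m IH]; first by rewrite leqn0 => /eqP ->.
rewrite leq_eqVlt => /orP [/eqP -> //|Hi].
by rewrite /= nth_rcons size_Flist Hi IH.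
Qed.

Lemma F0 k : Fnat k 0 = 0. Proof. by []. Qed.
Lemma F1 k : Fnat k 1 = 1. Proof. by []. Qed.
Lemma FS k m : Fnat k m.+2 = \sum_(1 <= j < k.+1) Fnat k (m.+2 - j).
Proof.
rewrite /Fnat; change (Flist k m.+2) with (rcons (Flist k m.+1) (if m.+1 == 0 then 1 else \sum_(1 <= j < k.+1) nth 0 (Flist k m.+1) (m.+2 - j))); rewrite nth_rcons size_Flist ltnn eqxx.
apply: eq_big_nat => j /andP [Hj _].
rewrite (@Flist_prefix k m.+1) //; apply: leq_trans (leq_sub2l m.+2 Hj) _; by rewrite subn1.
Qed.

Lemma FkE k i j : Fk k (i%:Z - j%:Z + 1)%R = Fnat k (i.+1 - j).
Proof.
have -> : (i%:Z - j%:Z + 1 = i.+1%:Z - j%:Z)%R by rewrite intS addrC addrA.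
case: (leqP j i.+1) => H; first by rewrite subzn.
rewrite (eqP (ltnW H : i.+1 <= j)) /=.
have -> : (i.+1%:Z - j%:Z = Negz (j - i.+2))%R.
  rewrite NegzE -subSn // subSS -subzn ?(ltnW H) //.
  by rewrite opprB.
by [].
Qed.

Lemma SkE k t j : Sk k (t%:Z - j%:Z + 1)%R = \sum_(1 <= m < (t.+1 - j).+1) Fnat k m.
Proof.
have -> : (t%:Z - j%:Z + 1 = t.+1%:Z - j%:Z)%R by rewrite intS addrC addrA.
case: (leqP j t.+1) => H; first by rewrite subzn.
rewrite (eqP (ltnW H : t.+1 <= j)) /=.
have -> : (t.+1%:Z - j%:Z = Negz (j - t.+2))%R.
  rewrite NegzE -subSn // subSS -subzn ?(ltnW H) //.
  by rewrite opprB.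
by rewrite big_geq.
Qed.

Lemma Frec k i j : 0 < j ->
  Fnat k (i.+1 - j) = (j == i) + \sum_(1 <= l < k.+1) Fnat k (i.+1 - j - l).
Proof.
move=> Hj.
case: (ltngtP j i) => H.
- have E : i.+1 - j = (i - j - 1).+2.
    move/ltP: H => H; move/ltP: Hj => Hj. rewrite -!minusE. lia.
  rewrite E FS add0n; apply: eq_big_nat => l _ //.
- have E : i.+1 - j = 0 by apply/eqP; rewrite subn_eq0.
  rewrite E F0 add0n big1_seq // => l _; rewrite sub0n.
- rewrite H subSnn F1 add1n; congr S.
  rewrite big1_seq // => l /andP [_ Hl]; move: Hl; rewrite mem_index_iota => /andP [Hl _].
  have -> : 1 - l = 0 by apply/eqP; rewrite subn_eq0.
  exact: F0.
Qed.

Definition g U k i := \sum_(1 <= j < U.+1) Fnat k (i.+1 - j).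

Lemma grec U k i :
  g U k i = \sum_(1 <= j < U.+1) (j == i) + \sum_(1 <= l < k.+1) g U k (i - l).
Proof.
rewrite /g.
rewrite (eq_big_nat _ _ (F2 := fun j => (j == i) + \sum_(1 <= l < k.+1) Fnat k (i.+1 - j - l))); last first.
  by move=> j /andP [Hj _]; rewrite Frec.
rewrite big_split /=; congr addn.
rewrite exchange_big_nat; apply: eq_big_nat => l _; apply: eq_big_nat => j /andP [Hj _].
congr Fnat. move/leP: Hj => Hj. rewrite -!minusE. lia.
Qed.

Lemma ind_sum U i : \sum_(1 <= j < U.+1) (j == i) = (0 < i) && (i <= U).
Proof.
elim: U => [|U IH]; first by rewrite big_geq //; case: i.
rewrite big_nat_recr //= IH.
case: (ltngtP i U.+1) => H.
- by rewrite ltnS in H; rewrite addn0 andbT H andbT.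
- have -> : (i <= U) = false by rewrite leqNgt (ltnW H).
  by case: (0 < i).
- by rewrite H /= ltnn.
Qed.

Lemma reidx (h : nat -> nat) i K : K <= i ->
  \sum_(1 <= l < K.+1) h (i - l) = \sum_(i - K <= m < i) h m.
Proof.
elim: K => [|K IH] HK; first by rewrite !big_geq // subn0.
rewrite big_nat_recr //= IH ?(ltnW HK) //.
rewrite (@big_ltn _ _ _ (i - K.+1)); last first.
  move/leP: HK => HK; apply/ltP; rewrite -!minusE; lia.
have -> : (i - K.+1).+1 = i - K by move/leP: HK => HK; rewrite -!minusE; lia.
by rewrite addnC.
Qed.

Lemma g0 U k : g U k 0 = 0.
Proof.
rewrite /g big1_seq // => j /andP [_ Hj]; move: Hj; rewrite mem_index_iota => /andP [Hj _].
have -> : 1 - j = 0 by apply/eqP; rewrite subn_eq0.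
exact: F0.
Qed.

Lemma low U k i : 0 < i -> i <= k ->
  \sum_(1 <= l < k.+1) g U k (i - l) = \sum_(1 <= m < i) g U k m.
Proof.
move=> Hi Hik.
rewrite (@big_cat_nat _ _ _ i.+1) //= ?ltnS //.
rewrite [X in _ + X = _]big1_seq ?addn0; last first.
  move=> l /andP [_]; rewrite mem_index_iota => /andP [Hl _].
  have -> : i - l = 0 by apply/eqP; rewrite subn_eq0 ltnW.
  exact: g0.
by rewrite reidx // subnn big_ltn // g0 add0n.
Qed.

Lemma colsum k t j : 0 < j ->
  \sum_(1 <= i < t.+1) Fnat k (i.+1 - j) = \sum_(1 <= m < (t.+1 - j).+1) Fnat k m.
Proof.
move=> Hj; elim: t => [|t IH]; first by rewrite !big_geq //; case: j Hj.
rewrite big_nat_recr //= IH.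
case: (leqP j t.+1) => H.
- by rewrite (subSn H) [in RHS]big_nat_recr.
- have -> : t.+2 - j = 0 by apply/eqP; rewrite subn_eq0.
  have -> : t.+1 - j = 0 by apply/eqP; rewrite subn_eq0 ltnW.
  by rewrite F0 addn0.
Qed.

Theorem mainTheorem3 (U k : nat) (hU : 1 <= U) (hUk : U <= k) (hdiv : U %| k)
  (n : nat -> nat)
  (h0 : n 0 = 1)
  (h1 : forall i, 1 <= i <= U -> n i = \sum_(0 <= m < i) n m)
  (h2 : forall i, U < i <= k -> n i = \sum_(1 <= m < i) n m)
  (h3 : forall i, k < i -> n i = \sum_(i - k <= m < i) n m) :
  (forall i, 1 <= i -> n i = \sum_(1 <= j < U.+1) Fk k (i%:Z - j%:Z + 1)%R) /\
  (forall t, \sum_(1 <= i < t.+1) n i = \sum_(1 <= j < U.+1) Sk k (t%:Z - j%:Z + 1)%R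
          /\ \sum_(1 <= i < t.+1) n i = Nbar U k t%:Z).
Proof.
have key : forall i, 1 <= i -> n i = g U k i.
  suff H : forall N i, i <= N -> 1 <= i -> n i = g U k i by move=> i; apply: (H i).
  elim=> [|N IH] i HiN Hi; first by move: Hi; rewrite lt0n; move: HiN; rewrite leqn0 => ->.
  have IH' : forall lo, 0 < lo -> \sum_(lo <= m < i) n m = \sum_(lo <= m < i) g U k m.
    move=> lo Hlo; apply: eq_big_nat => m /andP [Hm1 Hm2]; apply: IH.
      by rewrite -ltnS; apply: leq_trans HiN.
    exact: leq_trans Hm1.
  rewrite grec ind_sum Hi /=.
  case: (leqP i U) => HiU.
    rewrite h1; last by rewrite Hi HiU.
    rewrite (big_ltn Hi) h0 (IH' 1 (ltn0Sn 0)) (low U k i Hi (leq_trans HiU hUk)).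
    by [].
  - rewrite add0n.
    case: (leqP i k) => Hik.
    + rewrite h2; last by rewrite HiU Hik.
      by rewrite (IH' 1 (ltn0Sn 0)) (low U k i Hi Hik).
    + rewrite (h3 i Hik) (reidx _ i k (ltnW Hik)) (IH' (i - k)) //.
      by rewrite subn_gt0.
have part1 : forall i, 1 <= i -> n i = \sum_(1 <= j < U.+1) Fk k (i%:Z - j%:Z + 1)%R.
  move=> i Hi; rewrite key //; apply: eq_big_nat => j _; by rewrite FkE.
split=> // t.
have E : \sum_(1 <= i < t.+1) n i = \sum_(1 <= j < U.+1) Sk k (t%:Z - j%:Z + 1)%R.
  rewrite (eq_big_nat _ _ (F2 := g U k)); last by move=> i /andP [Hi _]; apply: key.
  rewrite /g exchange_big_nat; apply: eq_big_nat => j /andP [Hj _].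
  by rewrite SkE colsum.
by split.
Qed.
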